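(* Let the setting and notation be as in the context, and suppose the Concentration Assumption and the $L_1$-Consistency Assumption hold. Assume that the (stochastic) map $\theta\mapsto \hat S(\hat{\boldsymbol\beta}_\theta)$ is either continuous with a single root $\tilde\theta$, or non-decreasing (with $\tilde\theta$ a root). Suppose further that for every $\epsilon>0$, $$\mathbf v^{*T}E_{\mathbf t}(\boldsymbol\beta^*_{\theta^*-\epsilon})\cdot \mathbf v^{*T}E_{\mathbf t}(\boldsymbol\beta^*_{\theta^*+\epsilon})<0 .$$ Then for every $\epsilon>0$, $\lim_{n\to\infty}\mathbb P^*(|\tilde\theta-\theta^*|>\epsilon)=0$.
   Context: Data: a random matrix $\mathbf Z\in\mathbb R^{n\times q}$ whose law depends on an unknown parameter; $\mathbb P^*$ denotes probability under the true parameter $\boldsymbol\beta^*\in\mathbb R^d$ (and $\mathbb E^*$ expectation). Asymptotics are as $n\to\infty$; $d$ may depend on $n$. Let $\mathbf t(\mathbf Z,\boldsymbol\beta):\mathbb R^{n\times q}\times\mathbb R^d\to\mathbb R^d$ be an estimating equation, twice differentiable in $\boldsymbol\beta$, with $E_{\mathbf t}(\boldsymbol\beta)=\lim_{n\to\infty}\mathbb E\,\mathbf t(\mathbf Z,\boldsymbol\beta)$, and $\boldsymbol\beta^*$ the unique solution of $E_{\mathbf t}(\boldsymbol\beta)=0$. Let $\mathbf T(\mathbf Z,\boldsymbol\beta)=\partial \mathbf t(\mathbf Z,\boldsymbol\beta)/\partial\boldsymbol\beta\in\mathbb R^{d\times d}$ and $E_{\mathbf T}(\boldsymbol\beta)=\lim_{n\to\infty}\mathbb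 E\,\mathbf T(\mathbf Z,\boldsymbol\beta)$, assumed invertible at $\boldsymbol\beta^*$. Write $\boldsymbol\beta=(\theta,\boldsymbol\gamma^T)^T$ with $\theta\in\mathbb R$ the first coordinate, $\boldsymbol\beta^*=(\theta^*,\boldsymbol\gamma^{*T})^T$; for any $\boldsymbol\beta=(\theta,\boldsymbol\gamma^T)^T$ and scalar $\check\theta$, $\boldsymbol\beta_{\check\theta}:=(\check\theta,\boldsymbol\gamma^T)^T$. Let $\mathbf v^{*T}$ be the first row of $[E_{\mathbf T}(\boldsymbol\beta^* )]^{-1}$. Estimators: $\hat{\boldsymbol\beta}=(\hat\theta,\hat{\boldsymbol\gamma}^T)^T=\arg\min\|\boldsymbol\beta\|_1$ subject to $\|\mathbf t(\mathbf Z,\boldsymbol\beta)\|_\infty\le\lambda$, and $\hat{\mathbf v}=\arg\min\|\mathbf v\|_1$ subject to $\|\mathbf v^T\mathbf T(\mathbf Z,\hat{\boldsymbol\beta})-\mathbf e_1\|_\infty\le\lambda'$, where $\mathbf e_1=(1,0,\dots,0)$ is a row vector and $\lambda,\lambda'>0$ are tuning parameters. Let $\hat S(\boldsymbol\beta)=\hat{\mathbf v}^T\mathbf t(\mathbf Z,\boldsymbol\beta)$; $\tilde\theta$ denotes a root of $\theta\mapsto\hat S(\hat{\boldsymbol\beta}_\theta)=\hat S(\theta,\hat{\boldsymbol\gamma})$. For a matrix $\mathbf A$, $[\mathbf A]_{-1}$ is $\mathbf A$ with its first column removed. Concentration Assumption: there is a neighborhood $\mathcal N_{\theta^*}$ of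 $\theta^*$ and functions $r_1(n,\theta),r_2(n,\theta),r_3(n,\theta)$ with $\sup_{\theta\in\mathcal N_{\theta^*}}\max_i r_i(n,\theta)=o(1)$ such that for all $\theta\in\mathcal N_{\theta^*}$: $\lim_n\mathbb P^*(\|\mathbf t(\mathbf Z,\boldsymbol\beta^*_\theta)-E_{\mathbf t}(\boldsymbol\beta^*_\theta)\|_\infty\le r_1(n,\theta))=1$; $\lim_n\mathbb P^*(|\mathbf v^{*T}\mathbf t(\mathbf Z,\boldsymbol\beta^*_\theta)-\mathbf v^{*T}E_{\mathbf t}(\boldsymbol\beta^*_\theta)|\le r_2(n,\theta))=1$; $\lim_n\mathbb P^*(\sup_{\nu\in[0,1]}\|\hat{\mathbf v}^T\mathbf T(\mathbf Z,\tilde{\boldsymbol\beta}_\nu)-\mathbf v^{*T}E_{\mathbf T}(\boldsymbol\beta^*_\theta)\|_\infty\le r_3(n,\theta))=1$ where $\tilde{\boldsymbol\beta}_\nu=\nu\hat{\boldsymbol\beta}_\theta+(1-\nu)\boldsymbol\beta^*_\theta$; and moreover $\sup_{\theta\in\mathcal N_{\theta^*}}\|E_{\mathbf t}(\boldsymbol\beta^*_\theta)\|_\infty<\infty$ and $\sup_{\theta\in\mathcal N_{\theta^*}}\|\mathbf v^{*T}[E_{\mathbf T}(\boldsymbol\beta^*_\theta)]_{-1}\|_\infty<\infty$. $L_1$-Consistency Assumption: $\lim_n\mathbb P^*(\|\hat{\boldsymbol\beta}-\boldsymbol\beta^*\|_1\le r_4(n))=1$ and $\lim_n\mathbb P^*(\|\hat{\mathbf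 v}-\mathbf v^*\|_1\le r_5(n))=1$ with $\max(r_4(n),r_5(n))=o(1)$. *)

(* Defs.v *)
From HB Require Import structures.
From mathcomp Require Import all_boot all_order all_algebra.
From mathcomp Require Import all_classical all_reals all_analysis.
Set Implicit Arguments. Unset Strict Implicit. Unset Printing Implicit Defensive.
Import Order.TTheory GRing.Theory Num.Theory.
Import numFieldNormedType.Exports.
Local Open Scope classical_set_scope.
Local Open Scope ring_scope.

Definition linf {R : realType} {m p : nat} (A : 'M[R]_(m, p)) : R :=
  \big[Num.max/0]_(i < m) \big[Num.max/0]_(j < p) `|A i j|.

Definition l1 {R : realType} {m p : nat} (A : 'M[R]_(m, p)) : R :=
  \sum_(i < m) \sum_(j < p) `|A i j|.

Definition dotv {R : realType} {k : nat} (u w : 'cV[R]_k) : R :=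
  \sum_(i < k) u i 0 * w i 0.

Definition setfst {R : realType} {k : nat} (b : 'cV[R]_k.+1) (th : R) : 'cV[R]_k.+1 :=
  \col_(i < k.+1) (if i == ord0 then th else b i 0).

Definition dropfirst {R : realType} {m k : nat} (A : 'M[R]_(m, k.+1)) : 'M[R]_(m, k) :=
  \matrix_(i < m, j < k) A i (lift ord0 j).

Definition e1 {R : realType} {k : nat} : 'rV[R]_k.+1 := delta_mx 0 ord0.

Definition first_row_inv {R : realType} {k : nat} (A : 'M[R]_k.+1) : 'cV[R]_k.+1 :=
  (row ord0 (invmx A))^T.

(* "with probability tending to one" (inner-probability form):
   measurable subevents A n of E n with P (A n) -> 1 *)
Definition wpa1 {d : measure_display} {T : measurableType d} {R : realType}
  (P : probability T R) (E : nat -> set T) : Prop :=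
  exists A : nat -> set T, (forall n, measurable (A n)) /\ (forall n, A n `<=` E n) /\
    ((fun n => P (A n)) @ \oo --> 1%E).

(* "P(E n) -> 0" (outer-probability form):
   measurable superevents B n of E n with P (B n) -> 0 *)
Definition prob_to0 {d : measure_display} {T : measurableType d} {R : realType}
  (P : probability T R) (E : nat -> set T) : Prop :=
  exists B : nat -> set T, (forall n, measurable (B n)) /\ (forall n, E n `<=` B n) /\
    ((fun n => P (B n)) @ \oo --> 0%E).

(* Main.v *)
Require Import Defs.
From HB Require Import structures.
From mathcomp Require Import all_boot all_order all_algebra.
From mathcomp Require Import all_classical all_reals all_analysis.
From mathcomp Require Import lra.
Import Order.TTheory GRing.Theory Num.Theory.
Import numFieldNormedType.Exports.
Local Open Scope classical_set_scope.
Local Open Scope ring_scope.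

Section Norms.
Context {R : realType}.

Lemma linf_ge m p (A : 'M[R]_(m, p)) i j : `|A i j| <= linf A.
Proof.
rewrite /linf; apply: le_trans (le_bigmax _ _ i).
exact: (le_bigmax _ (fun j => `|A i j|) j).
Qed.

Lemma linf_le m p (A : 'M[R]_(m, p)) c : 0 <= c ->
  (forall i j, `|A i j| <= c) -> linf A <= c.
Proof.
move=> c0 H; rewrite /linf; apply: bigmax_le => // i _.
by apply: bigmax_le => // j _.
Qed.

Lemma l1_col m (u : 'cV[R]_m) : l1 u = \sum_i `|u i 0|.
Proof. by rewrite /l1; apply: eq_bigr => i _; rewrite big_ord1. Qed.

Lemma l1_row m (u : 'rV[R]_m) : l1 u = \sum_j `|u 0 j|.
Proof. by rewrite /l1 big_ord1. Qed.

Lemma l1_ge0 m p (A : 'M[R]_(m, p)) : 0 <= l1 A.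
Proof. by rewrite /l1; apply: sumr_ge0 => i _; apply: sumr_ge0. Qed.

Lemma rowcol_bound m (r : 'rV[R]_m) (d : 'cV[R]_m) :
  `|(r *m d) 0 0| <= linf r * l1 d.
Proof.
rewrite mxE l1_col mulr_sumr; apply: le_trans (ler_norm_sum _ _ _) _.
apply: ler_sum => i _; rewrite normrM ler_wpM2r //.
exact: linf_ge.
Qed.

Lemma dot_bound m (u w : 'cV[R]_m) : `|dotv u w| <= l1 u * linf w.
Proof.
rewrite /dotv l1_col mulr_suml; apply: le_trans (ler_norm_sum _ _ _) _.
apply: ler_sum => i _; rewrite normrM ler_wpM2l //.
exact: linf_ge.
Qed.

Lemma dotvBl m (u v w : 'cV[R]_m) : dotv (u - v) w = dotv u w - dotv v w.
Proof. by rewrite /dotv -sumrB; apply: eq_bigr => i _; rewrite !mxE mulrBl. Qed.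

Lemma dotvBr m (u v w : 'cV[R]_m) : dotv u (v - w) = dotv u v - dotv u w.
Proof. by rewrite /dotv -sumrB; apply: eq_bigr => i _; rewrite !mxE mulrBr. Qed.

Lemma dotv_mx m (u w : 'cV[R]_m) : dotv u w = (u^T *m w) 0 0.
Proof. by rewrite mxE; apply: eq_bigr => i _; rewrite mxE. Qed.

End Norms.
Section MVT.
Context {R : realType} {m : nat}.

Lemma dotv_diff (v : 'cV[R]_m) x : differentiable (dotv v) x.
Proof.
have -> : dotv v = \sum_(i < m) (v i 0 *: (fun w : 'cV[R]_m => w i 0)).
  by apply/funext => w; rewrite /dotv fct_sumE; apply: eq_bigr => i _.
apply: differentiable_sum => i; apply: differentiableZ.
exact: differentiable_coord.
Qed.

Lemma dotv_d (v : 'cV[R]_m) x h : 'd (dotv v) x h = dotv v h.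
Proof.
have lin : linear (dotv v).
  move=> c u w; rewrite /dotv scaler_sumr -big_split /=.
  by apply: eq_bigr => i _; rewrite !mxE mulrDr scalerAr.
pose lM := GRing.isLinear.Build _ _ _ _ _ lin.
pose L : {linear 'cV[R]_m -> R} := HB.pack (dotv v) lM.
have -> : dotv v = L by [].
rewrite diff_lin //.
by move=> y; apply: differentiable_continuous; apply: dotv_diff.
Qed.

Lemma mvt_score (tt : 'cV[R]_m -> 'cV[R]_m) (TT : 'cV[R]_m -> 'M[R]_m)
  (v a b : 'cV[R]_m) :
  (forall x, differentiable tt x /\ forall h, 'd tt x h = TT x *m h) ->
  exists2 c, 0 <= c <= 1 &
    dotv v (tt a) - dotv v (tt b) =
    ((v^T *m TT (c *: a + (1 - c) *: b)) *m (a - b)) 0 0.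
Proof.
move=> Htt.
pose path := ( *:%R ^~ (a - b)) + cst b : R -> 'cV[R]_m.
have Hpath nu : nu *: a + (1 - nu) *: b = path nu.
  have -> : path nu = nu *: (a - b) + b by []. by rewrite scalerBr scalerBl scale1r addrCA addrC.
pose F := dotv v \o tt \o path.
have dpath x : differentiable path x.
  have : is_diff x path (( *:%R ^~ (a - b)) + 0) by exact: is_diffD.
  by case.
have dF x : differentiable F x.
  apply: differentiable_comp => //.
  apply: differentiable_comp; [exact: (Htt _).1 | exact: dotv_diff].
have dFv x : 'd F x 1 = ((v^T *m TT (path x)) *m (a - b)) 0 0.
  rewrite /F diff_comp //; last first.
    apply: differentiable_comp; [exact: (Htt _).1 | exact: dotv_diff].
  rewrite /= diff_comp //; [|exact: (Htt _).1|exact: dotv_diff].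
  rewrite /= dotv_d (Htt _).2.
  have -> : 'd path x 1 = a - b.
    have -> : 'd path x = ( *:%R ^~ (a - b)) + 0 :> (R -> _).
      by apply: diff_val; exact: is_diffD.
    by rewrite /= addr0 scale1r.
  by rewrite dotv_mx mulmxA.
have HD (x : R) : x \in `]0, 1[%R -> is_derive x 1 F ('d F x 1).
  move=> _; apply: DeriveDef; first exact: diff_derivable.
  exact: deriveE.
have HC : {within `[0, 1], continuous F}.
  apply: continuous_subspaceT => y; exact: differentiable_continuous.
have [c c01 Hc] := @MVT_segment R F (fun x => 'd F x 1) 0 1 ler01 HD HC.
exists c; first by move: c01; rewrite in_itv.
move: Hc; rewrite subr0 mulr1 dFv -Hpath /F /= => <-.
have -> : path 1 = a.
  by have -> : path 1 = 1 *: (a - b) + b by []; rewrite scale1r subrK.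
have -> : path 0 = b.
  by have -> : path 0 = 0 *: (a - b) + b by []; rewrite scale0r add0r.
by [].
Qed.
End MVT.

Section Key.
Context {R : realType}.

Lemma linf_ge0 m p (A : 'M[R]_(m, p)) : 0 <= linf A.
Proof.
rewrite /linf; elim/big_ind: _ => //.
  by move=> x y hx hy; rewrite le_max hx.
move=> i _; elim/big_ind: _ => //.
by move=> x y hx hy; rewrite le_max hx.
Qed.

Lemma linf_tri m p (A B : 'M[R]_(m, p)) : linf A <= linf (A - B) + linf B.
Proof.
apply: linf_le; first by rewrite addr_ge0 // linf_ge0.
move=> i j; have -> : A i j = (A - B) i j + B i j by rewrite !mxE subrK.
by apply: le_trans (ler_normD _ _) _; rewrite lerD // linf_ge.
Qed.

Lemma l1_setfst k (bh bs : 'cV[R]_k.+1) th :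
  l1 (setfst bh th - setfst bs th) <= l1 (bh - bs).
Proof.
rewrite !l1_col; apply: ler_sum => i _; rewrite !mxE.
by case: ifP => _; rewrite ?subrr ?normr0.
Qed.

Lemma setfst_first k (bh bs : 'cV[R]_k.+1) th :
  (setfst bh th - setfst bs th) ord0 0 = 0.
Proof. by rewrite !mxE eqxx subrr. Qed.

Lemma drop_bound k (M : 'rV[R]_k.+1) (d : 'cV[R]_k.+1) :
  d ord0 0 = 0 -> `|(M *m d) 0 0| <= linf (dropfirst M) * l1 d.
Proof.
move=> d0; rewrite mxE big_ord_recl d0 mulr0 add0r l1_col big_ord_recl d0.
rewrite normr0 add0r mulr_sumr; apply: le_trans (ler_norm_sum _ _ _) _.
apply: ler_sum => i _; rewrite normrM ler_wpM2r //.
have := @linf_ge R 1 k (dropfirst M) 0 i; by rewrite mxE.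
Qed.

Lemma mxBE m p (A B : 'M[R]_(m, p)) i j : (A - B) i j = A i j - B i j.
Proof. by rewrite !mxE. Qed.

Lemma key {m} (tt : 'cV[R]_m.+1 -> 'cV[R]_m.+1) (TT : 'cV[R]_m.+1 -> 'M[R]_m.+1)
  (vh vs bh bs Etb : 'cV[R]_m.+1) (Mrow : 'rV[R]_m.+1) (th del C1 C2 gval : R) :
  (forall x, differentiable tt x /\ forall h, 'd tt x h = TT x *m h) ->
  linf (tt (setfst bs th) - Etb) <= del ->
  `|dotv vs (tt (setfst bs th)) - gval| <= del ->
  (forall nu : R, 0 <= nu <= 1 ->
     linf (vh^T *m TT (nu *: setfst bh th + (1 - nu) *: setfst bs th) - Mrow)
       <= del) ->
  linf Etb <= C1 -> linf (dropfirst Mrow) <= C2 ->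
  l1 (bh - bs) <= del -> l1 (vh - vs) <= del -> del <= 1 ->
  `|dotv vh (tt (setfst bh th)) - gval| <= del * (3 + C1 + C2).
Proof.
move=> Htt H1 H2 H3 HC1 HC2 H4 H5 d1.
set a := setfst bh th; set b := setfst bs th.
have [c c01 Hc] := @mvt_score R m.+1 tt TT vh a b Htt.
have L0 := @l1_ge0 R _ _ (a - b).
have Lab : l1 (a - b) <= del by apply: le_trans (l1_setfst _ _ _ _) H4.
have d0 : 0 <= del by apply: le_trans L0 Lab.
have C10 : 0 <= C1 by apply: le_trans (linf_ge0 _ _ _) HC1.
have C20 : 0 <= C2 by apply: le_trans (linf_ge0 _ _ _) HC2.
have E : dotv vh (tt a) - gval = ((vh^T *m TT (c *: a + (1 - c) *: b) - Mrow) *m (a - b)) 0 0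
   + (Mrow *m (a - b)) 0 0 + dotv (vh - vs) (tt b) + (dotv vs (tt b) - gval).
  rewrite dotvBl mulmxBl mxBE -Hc.
  lra.
rewrite E.
have B1 : `|((vh^T *m TT (c *: a + (1 - c) *: b) - Mrow) *m (a - b)) 0 0| <= del * del.
  apply: le_trans (rowcol_bound _ _ _) _.
  apply: ler_pM => //; [exact: linf_ge0 | exact: H3].
have B2 : `|(Mrow *m (a - b)) 0 0| <= C2 * del.
  apply: le_trans (drop_bound _ _ _ (setfst_first _ _ _ _)) _.
  by apply: ler_pM => //; exact: linf_ge0.
have B3 : `|dotv (vh - vs) (tt b)| <= del * (del + C1).
  apply: le_trans (dot_bound _ _ _) _.
  apply: ler_pM => //; [exact: l1_ge0 | exact: linf_ge0 |].
  by apply: le_trans (@linf_tri _ _ _ Etb) _; rewrite lerD.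
set x1 := (X in `|X| <= del * del) in B1.
set x2 := (X in `|X| <= C2 * del) in B2.
set x3 := (X in `|X| <= del * (del + C1)) in B3.
set x4 := dotv vs (tt b) - gval in H2 *.
apply: le_trans (ler_normD _ _) _.
apply: le_trans (lerD (ler_normD _ _) (lexx _)) _.
apply: le_trans (lerD (lerD (ler_normD _ _) (lexx _)) (lexx _)) _.
have : del * del <= del by rewrite ler_piMr.
nra.
Qed.

End Key.

Section Root.
Context {R : realType}.

Lemma root_in (f : R -> R) th0 e tl : 0 < e -> f tl = 0 ->
  ((continuous f /\ (forall th, f th = 0 -> th = tl)) \/ {homo f : x y / x <= y}) ->
  f (th0 - e) * f (th0 + e) < 0 -> `|tl - th0| <= e.
Proof.
move=> e0 ftl [[fc fu]|fm] Hs.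
- have le : th0 - e <= th0 + e by lra.
  have cf : {within `[th0 - e, th0 + e], continuous f}.
    by apply: continuous_subspaceT => x; exact: fc.
  have mm : Num.min (f (th0 - e)) (f (th0 + e)) <= 0 <= Num.max (f (th0 - e)) (f (th0 + e)).
    rewrite ge_min le_max.
    have [hx|hx] := leP 0 (f (th0 - e)).
      have hy : f (th0 + e) <= 0 by nra.
      by rewrite hy orbT.
    have hy : 0 <= f (th0 + e) by nra.
    by rewrite ?(ltW hx) ?hy ?orbT.
  have [c cI fc0] := @IVT R f (th0 - e) (th0 + e) 0 le cf mm.
  have := fu c fc0 => <-; move: cI; rewrite in_itv /= => /andP [] ? ?.
    rewrite ler_norml; apply/andP; split; lra.
- rewrite ler_norml; apply/andP; split.
  + rewrite lerBrDl; rewrite leNgt; apply/negP => hl.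
    have a1 : f tl <= f (th0 - e) by apply: fm; lra.
    have a2 : f (th0 - e) <= f (th0 + e) by apply: fm; lra.
    rewrite ftl in a1; nra.
  + rewrite leNgt; apply/negP => hl.
    have a1 : f (th0 + e) <= f tl by apply: fm; lra.
    have a2 : f (th0 - e) <= f (th0 + e) by apply: fm; lra.
    rewrite ftl in a1; nra.
Qed.
End Root.

Section Prob.
Context {R : realType} {d : measure_display} {T : measurableType d}.
Variable (P : probability T R).

Lemma pr_fin {A} : measurable A -> P A = (fine (P A))%:E.
Proof. by move=> mA; rewrite fineK // fin_num_measure. Qed.

Lemma pr_le1 {A} : measurable A -> fine (P A) <= 1.
Proof. by move=> mA; have := probability_le1 P mA; rewrite pr_fin // lee_fin. Qed.

Lemma prI_ge {A B} : measurable A -> measurable B ->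
  1 - fine (P (A `&` B)) <= (1 - fine (P A)) + (1 - fine (P B)).
Proof.
move=> mA mB; have h := measureU2 P (measurableC mA) (measurableC mB).
rewrite -setCI in h.
have : (P (~` (A `&` B)) <= P (~` A) + P (~` B))%E := h.
rewrite (probability_setC P (measurableI _ _ mA mB)) (probability_setC P mA) (probability_setC P mB).
by rewrite (pr_fin mA) (pr_fin mB) (pr_fin (measurableI _ _ mA mB)) -!EFinB -EFinD lee_fin.
Qed.

Lemma wpa1_and (E1 E2 : nat -> set T) : wpa1 P E1 -> wpa1 P E2 ->
  wpa1 P (fun n => E1 n `&` E2 n).
Proof.
move=> [A1 [m1 [s1 c1]]] [A2 [m2 [s2 c2]]].
exists (fun n => A1 n `&` A2 n); split; first by move=> n; exact: measurableI.
split; first by move=> n x [h1 h2]; split; [exact: s1|exact: s2].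
apply/fine_cvgP; split; first by near=> n; rewrite fin_num_measure //; exact: measurableI.
move/fine_cvgP: c1 => [_ /cvgrPdist_le c1]; move/fine_cvgP: c2 => [_ /cvgrPdist_le c2].
apply/cvgrPdist_le => e e0.
have e20 : 0 < e / 2 by rewrite divr_gt0.
move: (c1 _ e20) (c2 _ e20) => {}c1 {}c2.
near=> n.
have h1 : `|1 - (fine \o (fun n => P (A1 n))) n| <= e / 2 by near: n; exact: c1.
have h2 : `|1 - (fine \o (fun n => P (A2 n))) n| <= e / 2 by near: n; exact: c2.
have := prI_ge (m1 n) (m2 n); have h3 := pr_le1 (measurableI _ _ (m1 n) (m2 n)).
have h4 := pr_le1 (m1 n); have h5 := pr_le1 (m2 n).
move: h1 h2; rewrite /= !ger0_norm ?subr_ge0 //.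
lra.
Unshelve. all: by end_near.
Qed.

Lemma to0 (E F : nat -> set T) : wpa1 P E ->
  (exists n0, forall n, (n0 <= n)%N -> forall w, E n w -> ~ F n w) -> prob_to0 P F.
Proof.
move=> [A [mA [sA cA]]] [n0 Hn0].
exists (fun n => if (n0 <= n)%N then ~` A n else setT).
split; first by move=> n; case: ifP => _; [exact: measurableC|exact: measurableT].
split.
  move=> n w Fw; case: ifPn => // h Aw.
  exact: (Hn0 n h w (sA n w Aw) Fw).
apply/fine_cvgP; split.
  by near=> n; rewrite fin_num_measure //; case: ifP => _; [exact: measurableC|exact: measurableT].
move/fine_cvgP: cA => [_ /cvgrPdist_le cA].
apply/cvgrPdist_le => e e0.
move: (cA _ e0) => {}cA.
near=> n.
have hn : (n0 <= n)%N by near: n; exists n0 => // m /=.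
rewrite /= hn (probability_setC P (mA n)) (pr_fin (mA n)) -EFinB /= sub0r normrN.
by near: n; exact: cA.
Unshelve. all: by end_near.
Qed.

End Prob.

Lemma ev_ex (Q : nat -> Prop) : (\forall n \near \oo, Q n) ->
  exists n0, forall n, (n0 <= n)%N -> Q n.
Proof. by move=> [n0 _ H]; exists n0 => n hn; apply: H. Qed.

Lemma same_sign {R : realType} (a x : R) : `|a - x| < `|x| -> 0 < a * x.
Proof.
rewrite ltr_norml => /andP [h1 h2].
have [hx|hx] := leP 0 x.
  rewrite ger0_norm // in h1 h2; nra.
rewrite ltr0_norm // in h1 h2; nra.
Qed.

Lemma sign_prod {R : realType} (a b x y : R) : 0 < a * x -> 0 < b * y -> x * y < 0 ->
  a * b < 0.
Proof. move=> h1 h2 h3; nra. Qed.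

Lemma r_small {R : realType} (N : set R) (r : nat -> R -> R) (del : R) : 0 < del ->
  (fun n => ereal_sup [set (r n th)%:E | th in N]) @ \oo --> 0%E ->
  \forall n \near \oo, forall th, N th -> r n th <= del.
Proof.
move=> d0 /fine_cvgP [Hf /cvgrPdist_le Hc].
move: (Hc _ d0) => {}Hc.
near=> n => th Nth.
have hf : ereal_sup [set (r n th)%:E | th in N] \is a fin_num by near: n; exact: Hf.
have hc : `|0 - fine (ereal_sup [set (r n th)%:E | th in N])| <= del by near: n; exact: Hc.
have hu : ((r n th)%:E <= ereal_sup [set (r n th)%:E | th in N])%E.
  by apply: ereal_sup_ubound; exists th.
rewrite -(fineK hf) lee_fin in hu.
rewrite sub0r normrN in hc.
exact: le_trans hu (le_trans (ler_norm _) hc).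
Unshelve. all: by end_near.
Qed.

Lemma r_small' {R : realType} (r : nat -> R) (del : R) : 0 < del ->
  r @ \oo --> 0 -> \forall n \near \oo, r n <= del.
Proof.
move=> d0 /cvgrPdist_le Hc; move: (Hc _ d0) => {}Hc.
near=> n.
have hc : `|0 - r n| <= del by near: n; exact: Hc.
rewrite sub0r normrN in hc; exact: le_trans (ler_norm _) hc.
Unshelve. all: by end_near.
Qed.
Theorem theorem1
  (R : realType) (dsp : measure_display) (Omega : measurableType dsp)
  (P : probability Omega R)                          (* the true law P^* *)
  (q : nat) (k : nat -> nat)                         (* d = d_n = (k n).+1 *)
  (Z : forall n : nat, Omega -> 'M[R]_(n, q))        (* data *)
  (t : forall n : nat, 'M[R]_(n, q) -> 'cV[R]_((k n).+1) -> 'cV[R]_((k n).+1))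
  (T : forall n : nat, 'M[R]_(n, q) -> 'cV[R]_((k n).+1) -> 'M[R]_((k n).+1))
  (Et : forall n : nat, 'cV[R]_((k n).+1) -> 'cV[R]_((k n).+1))
  (ET : forall n : nat, 'cV[R]_((k n).+1) -> 'M[R]_((k n).+1))
  (bstar : forall n : nat, 'cV[R]_((k n).+1)) (thstar : R)
  (g : R -> R)                                       (* theta |-> v*^T E_t(beta*_theta) *)
  (lam lam' : nat -> R)
  (bhat vhat : forall n : nat, Omega -> 'cV[R]_((k n).+1))
  (thtil : nat -> Omega -> R)
  (N : set R) (r1 r2 r3 : nat -> R -> R) (r4 r5 : nat -> R)
  (* t twice differentiable in beta, with T = dt/dbeta *)
  (Hdiff : forall n z b, differentiable (t n z) b /\
                         (forall h, 'd (t n z) b h = T n z b *m h))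
  (Hdiff2 : forall n z b, differentiable (T n z) b)
  (* beta^* : unique root of E_t ; E_T at beta^* invertible *)
  (Hroot : forall n, Et n (bstar n) = 0)
  (Huniq : forall n b, Et n b = 0 -> b = bstar n)
  (Hinv : forall n, ET n (bstar n) \in unitmx)
  (Hthstar : forall n, bstar n ord0 0 = thstar)
  (* the population quantity v*^T E_t(beta*_theta) does not depend on n *)
  (Hg : forall n th,
      dotv (first_row_inv (ET n (bstar n))) (Et n (setfst (bstar n) th)) = g th)
  (* estimators *)
  (Hlam : forall n, 0 < lam n) (Hlam' : forall n, 0 < lam' n)
  (Hbhat : forall n w,
      linf (t n (Z n w) (bhat n w)) <= lam n /\
      (forall b, linf (t n (Z n w) b) <= lam n -> l1 (bhat n w) <= l1 b))
  (Hvhat : forall n w,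
      linf ((vhat n w)^T *m T n (Z n w) (bhat n w) - e1) <= lam' n /\
      (forall v : 'cV[R]_((k n).+1),
          linf (v^T *m T n (Z n w) (bhat n w) - e1) <= lam' n ->
          l1 (vhat n w) <= l1 v))
  (* theta~ is a root of theta |-> S^(beta^_theta); the map is continuous with a
     single root, or non-decreasing *)
  (Hthtil : forall n w,
      let f := fun th => dotv (vhat n w) (t n (Z n w) (setfst (bhat n w) th)) in
      f (thtil n w) = 0 /\
      ((continuous f /\ (forall th, f th = 0 -> th = thtil n w))
       \/ {homo f : x y / x <= y}))
  (* Concentration Assumption *)
  (HN : nbhs thstar N)
  (Hr : (fun n => ereal_sup [set (Num.max (r1 n th) (Num.max (r2 n th) (r3 n th)))%:E
                             | th in N]) @ \oo --> 0%E)
  (Hc1 : forall th, N th -> wpa1 P (fun n => [set w |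
      linf (t n (Z n w) (setfst (bstar n) th) - Et n (setfst (bstar n) th))
        <= r1 n th]))
  (Hc2 : forall th, N th -> wpa1 P (fun n => [set w |
      `| dotv (first_row_inv (ET n (bstar n))) (t n (Z n w) (setfst (bstar n) th))
         - dotv (first_row_inv (ET n (bstar n))) (Et n (setfst (bstar n) th)) |
        <= r2 n th]))
  (Hc3 : forall th, N th -> wpa1 P (fun n => [set w |
      forall nu : R, 0 <= nu <= 1 ->
        linf ((vhat n w)^T *m
                T n (Z n w) (nu *: setfst (bhat n w) th
                             + (1 - nu) *: setfst (bstar n) th)
              - (first_row_inv (ET n (bstar n)))^T *m ET n (setfst (bstar n) th))
        <= r3 n th]))
  (HEt : exists C : R, forall n th, N th ->
      linf (Et n (setfst (bstar n) th)) <= C)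
  (HET : exists C : R, forall n th, N th ->
      linf (dropfirst ((first_row_inv (ET n (bstar n)))^T
                       *m ET n (setfst (bstar n) th))) <= C)
  (* L1-Consistency Assumption *)
  (Hr45 : (fun n => Num.max (r4 n) (r5 n)) @ \oo --> 0)
  (Hl1b : wpa1 P (fun n => [set w | l1 (bhat n w - bstar n) <= r4 n]))
  (Hl1v : wpa1 P (fun n => [set w |
      l1 (vhat n w - first_row_inv (ET n (bstar n))) <= r5 n]))
  (* sign change of the population score *)
  (Hsign : forall eps : R, 0 < eps -> g (thstar - eps) * g (thstar + eps) < 0) :
  forall eps : R, 0 < eps ->
    prob_to0 P (fun n => [set w | `| thtil n w - thstar | > eps]).
Proof.
move=> eps eps0.
have [rr rr0 Hball] : exists2 rr : R, 0 < rr & forall x, `|x - thstar| < rr -> N x.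
  move/nbhs_ballP: HN => [rr rr0 H]; exists rr => // x hx; apply: H.
  by rewrite /ball /= distrC.
pose e := Num.min eps (rr / 2).
have e0 : 0 < e by rewrite lt_min eps0 divr_gt0.
have eeps : e <= eps by rewrite ge_min lexx.
have err : e < rr.
  have : e <= rr / 2 by rewrite ge_min lexx orbT.
  lra.
have N1 : N (thstar - e) by apply: Hball; rewrite addrC addKr normrN gtr0_norm.
have N2 : N (thstar + e) by apply: Hball; rewrite addrC addKr gtr0_norm.
have Hs := Hsign e e0.
pose eta := Num.min `|g (thstar - e)| `|g (thstar + e)|.
have eta0 : 0 < eta.
  rewrite lt_min !normr_gt0; apply/andP; split; apply/eqP => h; move: Hs;
  by rewrite h ?mul0r ?mulr0 ltxx.
have [C1 HC1] := HEt; have [C2 HC2] := HET.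
have C10 : 0 <= C1 by apply: le_trans (HC1 0%N _ N1); exact: linf_ge0.
have C20 : 0 <= C2 by apply: le_trans (HC2 0%N _ N1); exact: linf_ge0.
pose K := 3 + C1 + C2.
have K0 : 0 < K by rewrite /K; lra.
pose del := Num.min 1 (eta / (2 * K)).
have del0 : 0 < del by rewrite lt_min ltr01 divr_gt0 // mulr_gt0.
have del1 : del <= 1 by rewrite ge_min lexx.
have delK : del * K < eta.
  have : del <= eta / (2 * K) by rewrite ge_min lexx orbT.
  rewrite ler_pdivlMr ?mulr_gt0 //; lra.
have WA := fun E1 E2 => @wpa1_and R dsp Omega P E1 E2.
have W := WA _ _ (WA _ _ (WA _ _ (WA _ _ (WA _ _ (WA _ _ (WA _ _ 
  (Hc1 _ N1) (Hc1 _ N2)) (Hc2 _ N1)) (Hc2 _ N2)) (Hc3 _ N1)) (Hc3 _ N2)) Hl1b) Hl1v.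
apply: (@to0 R dsp Omega P _ _ W).
have ev1 := @r_small R N (fun n th => Num.max (r1 n th) (Num.max (r2 n th) (r3 n th))) del del0 Hr.
have ev2 := @r_small' R _ del del0 Hr45.
have [n1 Hn1] := ev_ex _ ev1; have [n2 Hn2] := ev_ex _ ev2.
exists (maxn n1 n2) => n hn w.
have Hrn := Hn1 n (leq_trans (leq_maxl _ _) hn).
have Hr45n := Hn2 n (leq_trans (leq_maxr _ _) hn).
move=> [[[[[[[h11 h12] h21] h22] h31] h32] hb] hv] Hgt.
have r4d : r4 n <= del by apply: le_trans Hr45n; rewrite le_max lexx.
have r5d : r5 n <= del by apply: le_trans Hr45n; rewrite le_max lexx orbT.
have close : forall th, N th -> eta <= `|g th| ->
  [set w | linf (t n (Z n w) (setfst (bstar n) th) - Et n (setfst (bstar n) th))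
        <= r1 n th] w ->
  [set w | `| dotv (first_row_inv (ET n (bstar n))) (t n (Z n w) (setfst (bstar n) th))
         - dotv (first_row_inv (ET n (bstar n))) (Et n (setfst (bstar n) th)) |
        <= r2 n th] w ->
  [set w | forall nu : R, 0 <= nu <= 1 ->
        linf ((vhat n w)^T *m
                T n (Z n w) (nu *: setfst (bhat n w) th
                             + (1 - nu) *: setfst (bstar n) th)
              - (first_row_inv (ET n (bstar n)))^T *m ET n (setfst (bstar n) th))
        <= r3 n th] w ->
  `|dotv (vhat n w) (t n (Z n w) (setfst (bhat n w) th)) - g th| < `|g th|.
  move=> th Nth geta /= a1 a2 a3.
  have rth := Hrn th Nth.
  have r1d : r1 n th <= del by apply: le_trans rth; rewrite le_max lexx.
  have r2d : r2 n th <= del by apply: le_trans rth; rewrite !le_max lexx orbT.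
  have r3d : r3 n th <= del by apply: le_trans rth; rewrite !le_max lexx !orbT.
  apply: le_lt_trans (lt_le_trans delK geta).
  apply: (@key R _ _ _ _ (first_row_inv (ET n (bstar n))) _ (bstar n)
     (Et n (setfst (bstar n) th))
     ((first_row_inv (ET n (bstar n)))^T *m ET n (setfst (bstar n) th))).
  - exact: Hdiff.
  - exact: le_trans a1 r1d.
  - by rewrite -(Hg n th); exact: le_trans a2 r2d.
  - by move=> nu hnu; exact: le_trans (a3 nu hnu) r3d.
  - exact: HC1.
  - exact: HC2.
  - exact: le_trans hb r4d.
  - exact: le_trans hv r5d.
  - exact: del1.
have c1 := close _ N1 (ltac:(by rewrite /eta ge_min lexx)) h11 h21 h31.
have c2 := close _ N2 (ltac:(by rewrite /eta ge_min lexx orbT)) h12 h22 h32.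
have [Hf0 Hcase] := Hthtil n w.
have sp := sign_prod _ _ _ _ (same_sign _ _ c1) (same_sign _ _ c2) Hs.
have := @root_in R _ thstar e _ e0 Hf0 Hcase sp.
move: Hgt => /=; lra.
Qed.
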